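(* Let $d\ge2$ and $m=2^{d-1}$. The $d$-layer skip RNN graph with skip lengths $k_l=2^{l-1}$ ($l=1,\dots,d$) and the $d$-layer dilated RNN graph with dilations $s_l=2^{l-1}$ ($l=1,\dots,d$) have the same values of $\mathcal d_i(n)$ for all $i\in\mathbb Z$ and $1\le n\le m$, and hence the same mean recurrent length with period $m$.
   Context: Dilated RNN graph with dilations $s_1,\dots,s_d$: vertex set $\{x_t: t\in\mathbb Z\}\cup\{c^{(l)}_t: t\in\mathbb Z,\ 1\le l\le d\}$, edges $x_t\to c^{(1)}_t$, $c^{(l)}_t\to c^{(l+1)}_t$ for $1\le l<d$, and $c^{(l)}_t\to c^{(l)}_{t+s_l}$ for $1\le l\le d$ (all edges). Skip RNN graph with skip lengths $k_1,\dots,k_d$: same vertex set and the same edges $x_t\to c^{(1)}_t$, $c^{(l)}_t\to c^{(l+1)}_t$, together with both $c^{(l)}_t\to c^{(l)}_{t+1}$ and $c^{(l)}_t\to c^{(l)}_{t+k_l}$ for each $l$ (all edges). In both graphs $x_t$ is the input and $c^{(d)}_t$ the output at time $t$; $\mathcal d_i(n)$ is the number of edges of a shortest directed path from $x_i$ to $c^{(d)}_{i+n}$; the mean recurrent length with period $m$ is $\bar{\mathcal d}=\frac1m\sum_{n=1}^{m}\max_{i\in\mathbb Z}\mathcal d_i(n)$. *)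

(* Defs.v *)
From mathcomp Require Import all_boot all_order all_algebra.
Set Implicit Arguments. Unset Strict Implicit. Unset Printing Implicit Defensive.
Import Order.TTheory GRing.Theory Num.Theory.

(* Vertices: x_t (input) and c^(l)_t (hidden node of layer l at time t). *)
Inductive vtx : Type := X of int | C of nat & int.

Definition dilated_edge (d : nat) (s : nat -> nat) (u v : vtx) : Prop :=
  match u, v with
  | X t, C l t' => l = 1%N /\ t' = t
  | C l t, C l' t' =>
      ((1 <= l)%N /\ (l < d)%N /\ l' = l.+1 /\ t' = t)
   \/ ((1 <= l)%N /\ (l <= d)%N /\ l' = l /\ t' = (t + (s l)%:Z)%R)
  | _, _ => False
  end.

Definition skip_edge (d : nat) (k : nat -> nat) (u v : vtx) : Prop :=
  match u, v with
  | X t, C l t' => l = 1%N /\ t' = t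
  | C l t, C l' t' =>
      ((1 <= l)%N /\ (l < d)%N /\ l' = l.+1 /\ t' = t)
   \/ ((1 <= l)%N /\ (l <= d)%N /\ l' = l /\ t' = (t + 1)%R)
   \/ ((1 <= l)%N /\ (l <= d)%N /\ l' = l /\ t' = (t + (k l)%:Z)%R)
  | _, _ => False
  end.

Inductive walk (e : vtx -> vtx -> Prop) : vtx -> vtx -> nat -> Prop :=
  | walk0 u : walk e u u 0
  | walkS u w v n : e u w -> walk e w v n -> walk e u v n.+1.

Definition dist (e : vtx -> vtx -> Prop) (u v : vtx) (n : nat) : Prop :=
  walk e u v n /\ forall n', walk e u v n' -> (n <= n')%N.

(* rec_len e d n D : D = max_{i in Z} d_i(n), where d_i(n) = dist from x_i to c^(d)_{i+n}. *)
Definition rec_len_max (e : vtx -> vtx -> Prop) (d n D : nat) : Prop :=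
  (exists i : int, dist e (X i) (C d (i + n%:Z)%R) D) /\
  (forall (i : int) (k : nat), dist e (X i) (C d (i + n%:Z)%R) k -> (k <= D)%N).

Definition mean_rec_len (e : vtx -> vtx -> Prop) (d m : nat) (r : rat) : Prop :=
  exists D : nat -> nat,
    (forall n, (1 <= n <= m)%N -> rec_len_max e d n (D n)) /\
    r = ((\sum_(1 <= n < m.+1) (D n)%:R) / m%:R)%R.

Definition pow2pred (l : nat) : nat := 2 ^ (l.-1).

(* Main.v *)
Require Import Defs.
From mathcomp Require Import all_boot all_order all_algebra.
From mathcomp Require Import zify.
From Stdlib Require Import Classical ClassicalEpsilon.
Import GRing.Theory Num.Theory.
Set Implicit Arguments. Unset Strict Implicit.

Local Open Scope ring_scope.

Definition sh (c : int) (u : vtx) : vtx :=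
  match u with X t => X (t + c) | C l t => C l (t + c) end.

Lemma walk_sh (e : vtx -> vtx -> Prop) c :
  (forall u v, e u v -> e (sh c u) (sh c v)) ->
  forall u v k, walk e u v k -> walk e (sh c u) (sh c v) k.
Proof.
move=> He u v k; elim=> [x|x w y n Hxw _ IH]; first by constructor.
by apply: walkS (He _ _ Hxw) IH.
Qed.

Lemma sh_sh c u : sh (- c) (sh c u) = u.
Proof. by case: u => [t|l t] /=; rewrite addrK. Qed.

Lemma dist_sh (e : vtx -> vtx -> Prop) c :
  (forall c u v, e u v -> e (sh c u) (sh c v)) ->
  forall u v k, dist e u v k -> dist e (sh c u) (sh c v) k.
Proof.
move=> He u v k [W M]; split; first exact: (@walk_sh e c (He c)).
move=> n' /(@walk_sh e (- c) (He (- c))); rewrite !sh_sh; exact: M.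
Qed.

Lemma skip_sh d c u v : skip_edge d pow2pred u v -> skip_edge d pow2pred (sh c u) (sh c v).
Proof.
case: u => [t|l t]; case: v => [t'|l' t'] //=.
  by move=> [-> ->].
move=> [[h1 [h2 [h3 h4]]]|[[h1 [h2 [h3 h4]]]|[h1 [h2 [h3 h4]]]]].
- by left; subst.
- by right; left; subst; repeat split => //; rewrite addrAC.
- by right; right; subst; repeat split => //; rewrite addrAC.
Qed.

Lemma dil_sh d c u v : dilated_edge d pow2pred u v -> dilated_edge d pow2pred (sh c u) (sh c v).
Proof.
case: u => [t|l t]; case: v => [t'|l' t'] //=.
  by move=> [-> ->].
move=> [[h1 [h2 [h3 h4]]]|[h1 [h2 [h3 h4]]]].
- by left; subst.
- by right; subst; repeat split => //; rewrite addrAC.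
Qed.

Lemma dil_skip d u v : dilated_edge d pow2pred u v -> skip_edge d pow2pred u v.
Proof.
case: u => [t|l t]; case: v => [t'|l' t'] //=.
by move=> [H|H]; [left|right; right].
Qed.

Lemma walk_dil_skip d u v k : walk (dilated_edge d pow2pred) u v k -> walk (skip_edge d pow2pred) u v k.
Proof.
elim=> [x|x w y n Hxw _ IH]; first by constructor.
by apply: walkS (dil_skip Hxw) IH.
Qed.

Lemma skip_to_dil d u v k : walk (skip_edge d pow2pred) u v k ->
  forall l t, u = C l t -> exists j : nat, exists k' : nat,
    (k' + j <= k)%N /\ walk (dilated_edge d pow2pred) (C l (t + j%:Z)) v k'.
Proof.
elim=> [x|x w y n Hxw _ IH] l t Ex.
  by exists 0%N, 0%N; split => //; rewrite addr0 Ex; constructor.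
subst x; case: w Hxw IH => [t'|l' t'] //= Hxw IH.
case: Hxw => [[h1 [h2 [h3 h4]]]|[[h1 [h2 [h3 h4]]]|[h1 [h2 [h3 h4]]]]]; subst.
- have [j [k' [Hk W]]] := IH _ _ erefl.
  exists j, k'.+1; split; first lia.
  apply: walkS W; left; done.
- have [j [k' [Hk W]]] := IH _ _ erefl.
  exists j.+1, k'; split; first lia.
  by move: W; congr walk; congr C; rewrite -addrA; congr (_ + _); lia.
- have [j [k' [Hk W]]] := IH _ _ erefl.
  exists j, k'.+1; split; first lia.
  by apply: walkS W; right; repeat split => //; rewrite addrAC.
Qed.

Lemma layer1 d j t v k : (1 <= d)%N ->
  walk (dilated_edge d pow2pred) (C 1 (t + j%:Z)) v k ->
  walk (dilated_edge d pow2pred) (C 1 t) v (k + j).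
Proof.
move=> hd; elim: j t k => [|j IH] t k.
  by rewrite addr0 addn0.
move=> W; rewrite addnS -addSn; apply: (walkS (w := C 1 (t + 1))).
  by right; repeat split.
apply: IH; move: W; congr walk; congr C; rewrite -addrA; congr (_ + _); lia.
Qed.

Lemma skipX d i v k : (1 <= d)%N -> walk (skip_edge d pow2pred) (X i) v k ->
  exists k', (k' <= k)%N /\ walk (dilated_edge d pow2pred) (X i) v k'.
Proof.
move=> hd W; inversion W as [|u w v' n Hxw W']; subst; first by exists 0%N; split => //; constructor.
case: w Hxw W' => [t'|l' t'] //= [-> ->] W'.
have [j [k' [Hk W2]]] := skip_to_dil W' erefl.
exists (k' + j).+1; split; first lia.
apply: walkS (layer1 hd W2); done.
Qed.

Lemma dist_equiv d i v k : (1 <= d)%N ->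
  dist (skip_edge d pow2pred) (X i) v k <-> dist (dilated_edge d pow2pred) (X i) v k.
Proof.
move=> hd; split.
- move=> [W M]; have [k' [Hk W']] := skipX hd W.
  have := M _ (walk_dil_skip W') => Hk2.
  have -> : k = k' by lia.
  split => // n' /walk_dil_skip /M; lia.
- move=> [W M]; split; first exact: walk_dil_skip.
  move=> n' /(skipX hd) [k' [Hk W']]; have := M _ W'; lia.
Qed.

Lemma rec_equiv d n D : (1 <= d)%N ->
  rec_len_max (skip_edge d pow2pred) d n D <-> rec_len_max (dilated_edge d pow2pred) d n D.
Proof.
move=> hd; split.
- move=> [[i Hi] M]; split; first by exists i; apply/dist_equiv.
  by move=> i' k /(dist_equiv _ _ _ hd) /M.
- move=> [[i Hi] M]; split; first by exists i; apply/dist_equiv.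
  by move=> i' k /(dist_equiv _ _ _ hd) /M.
Qed.

Lemma mean_equiv d m r : (1 <= d)%N ->
  mean_rec_len (skip_edge d pow2pred) d m r <-> mean_rec_len (dilated_edge d pow2pred) d m r.
Proof.
move=> hd; split; move=> [D [H1 H2]]; exists D; split => // n /H1; have := @rec_equiv d n (D n) hd; tauto.
Qed.

Lemma min_exists (P : nat -> Prop) n : P n -> exists k, P k /\ forall k', P k' -> (k <= k')%N.
Proof.
elim: n {-2}n (leqnn n) => [|N IH] n Hn Pn.
  exists n; split => // k' _; lia.
case: (classic (exists k', P k' /\ (k' < n)%N)) => [[k' [Pk Hk]]|Hno].
  by apply: (IH k') => //; lia.
exists n; split => // k' Pk; case: (leqP n k') => // Hlt.
by exfalso; apply: Hno; exists k'.
Qed.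

Lemma up_chain d t l : (1 <= l <= d)%N ->
  walk (dilated_edge d pow2pred) (C l t) (C d t) (d - l).
Proof.
move=> /andP [h1 h2].
suff: forall q l, (1 <= l)%N -> (l <= d)%N -> (d - l)%N = q ->
  walk (dilated_edge d pow2pred) (C l t) (C d t) q by move=> /(_ _ l h1 h2 erefl).
clear h1 h2 l; move=> q; elim: q => [|q IH] l h1 h2 Eq.
  have -> : l = d by lia.
  constructor.
apply: (walkS (w := C l.+1 t)); first by left; repeat split => //; lia.
apply: IH; lia.
Qed.

Lemma dist_exists d n : (1 <= d)%N ->
  exists k, dist (dilated_edge d pow2pred) (X 0) (C d n%:Z) k.
Proof.
move=> hd.
have W : walk (dilated_edge d pow2pred) (X 0) (C d n%:Z) ((d - 1) + n).+1.
  apply: (walkS (w := C 1 0)); first by split.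
  apply: layer1 => //; rewrite add0r; apply: up_chain; lia.
have [k [Pk M]] := min_exists W.
by exists k.
Qed.

Lemma dist_uniq e u v a b : dist e u v a -> dist e u v b -> a = b.
Proof. move=> [Wa Ma] [Wb Mb]; have := Ma _ Wb; have := Mb _ Wa; lia. Qed.

Lemma rec_exists d n : (1 <= d)%N -> exists D, rec_len_max (dilated_edge d pow2pred) d n D.
Proof.
move=> hd; have [K HK] := dist_exists n hd.
exists K; split; first by exists 0; rewrite add0r.
move=> i k Hk.
have := dist_sh (- i) (@dil_sh d) Hk => /=.
rewrite addrN addrAC addrN add0r => H.
by rewrite (dist_uniq H HK).
Qed.

Theorem mainTheorem5 (d : nat) (hd : (2 <= d)%N) :
  let m := (2 ^ d.-1)%N in
  (forall (i : int) (n k : nat), (1 <= n <= m)%N ->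
     (dist (skip_edge d pow2pred) (X i) (C d (i + n%:Z)%R) k <->
      dist (dilated_edge d pow2pred) (X i) (C d (i + n%:Z)%R) k)) /\
  (exists r : rat, mean_rec_len (skip_edge d pow2pred) d m r /\
                   mean_rec_len (dilated_edge d pow2pred) d m r) /\
  (forall r : rat, mean_rec_len (skip_edge d pow2pred) d m r <->
                   mean_rec_len (dilated_edge d pow2pred) d m r).
Proof.
have hd1 : (1 <= d)%N by lia.
move=> m; split; first by move=> i n k _; apply: dist_equiv.
split; last by move=> r; apply: mean_equiv.
pose D n := proj1_sig (constructive_indefinite_description _ (rec_exists n hd1)).
have HD n : rec_len_max (dilated_edge d pow2pred) d n (D n).
  exact: proj2_sig (constructive_indefinite_description _ (rec_exists n hd1)).
exists ((\sum_(1 <= n < m.+1) (D n)%:R) / m%:R)%R.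
have Hdil : mean_rec_len (dilated_edge d pow2pred) d m
   ((\sum_(1 <= n < m.+1) (D n)%:R) / m%:R)%R by exists D.
by split => //; apply/mean_equiv.
Qed.
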